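(* Let $(f,t)$ be a tax-based mechanism (with $n\ge 2$ players), where each type set $\Theta_i$ is a compact subset of some $\mathbb{R}^k$ and each $t_i$ is continuous. Define $T(\theta):=\sum_{i=1}^n t_i(\theta)$, $S_i^{BCGC}(\theta_{-i}):=\max_{\theta_i'\in\Theta_i} T(\theta_i',\theta_{-i})$, and $t_i^{BCGC}(\theta):=t_i(\theta)-S_i^{BCGC}(\theta_{-i})/n$. Then: (i) the mechanism $(f,t^{BCGC})$ is feasible; (ii) if $(f,t)$ is feasible, then either $t^{BCGC}=t$ or $(f,t^{BCGC})$ dominates $(f,t)$.
   Context: Setting: a set of decisions $D$, players $1,\dots,n$ ($n\ge2$), type sets $\Theta_i$, $\Theta:=\Theta_1\times\cdots\times\Theta_n$, and initial utility functions $v_i:D\times\Theta_i\to\mathbb{R}$. A tax-based mechanism is a pair $(f,t)$ with $f:\Theta\to D$ and $t=(t_1,\dots,t_n):\Theta\to\mathbb{R}^n$; player $i$'s final utility when reports are $\theta'$ and true type is $\theta_i$ is $v_i(f(\theta'),\theta_i)+t_i(\theta')$ (so $t_i>0$ means $i$ receives money). The mechanism is feasible if $\sum_i t_i(\theta)\le 0$ for all $\theta\in\Theta$. For two mechanisms with the same decision function, $t'$ dominates $t$ if $t_i(\theta)\le t'_i(\theta)$ for all $\theta$ and all $i$, with strict inequality for some $\theta$ and some $i$. *)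

(* Defs.v *)
From mathcomp Require Import all_boot.
From Stdlib Require Import Reals ClassicalEpsilon.
Set Implicit Arguments. Unset Strict Implicit. Unset Printing Implicit Defensive.
Local Open Scope R_scope.

(* A point of R^k is represented by a list of reals of length k
   (coordinates read with [nth 0]).  Players are ['I_n]; a type profile is a
   map ['I_n -> list R]; player i's types live in R^(k i). *)

Definition profile (n : nat) := 'I_n -> list R.

(* sup-norm closeness (induces the usual topology of R^k) *)
Definition close (d : R) (x y : list R) : Prop :=
  forall j : nat, Rabs (nth 0 x j - nth 0 y j) < d.

Definition open_in (k : nat) (U : list R -> Prop) : Prop :=
  forall x, U x -> size x = k /\
    exists d, 0 < d /\ forall y, size y = k -> close d y x -> U y.

Definition compact_in (k : nat) (K : list R -> Prop) : Prop :=
  (forall x, K x -> size x = k) /\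
  forall (I : Type) (U : I -> list R -> Prop),
    (forall a, open_in k (U a)) ->
    (forall x, K x -> exists a, U a x) ->
    exists l : list I, forall x, K x -> exists a, List.In a l /\ U a x.

Definition inTheta (n : nat) (Theta : 'I_n -> list R -> Prop) (th : profile n) : Prop :=
  forall i, Theta i (th i).

Definition upd (n : nat) (th : profile n) (i : 'I_n) (x : list R) : profile n :=
  fun j => if j == i then x else th j.

Definition cont_on (n : nat) (Theta : 'I_n -> list R -> Prop) (g : profile n -> R) : Prop :=
  forall th, inTheta Theta th -> forall eps, 0 < eps ->
    exists d, 0 < d /\ forall th', inTheta Theta th' ->
      (forall i, close d (th' i) (th i)) -> Rabs (g th' - g th) < eps.

Definition Ttot (n : nat) (t : 'I_n -> profile n -> R) (th : profile n) : R :=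
  \big[Rplus/0]_(i < n) t i th.

Definition feasible (n : nat) (Theta : 'I_n -> list R -> Prop) (t : 'I_n -> profile n -> R) : Prop :=
  forall th, inTheta Theta th -> Ttot t th <= 0.

(* t' dominates t (same decision function) *)
Definition dominates (n : nat) (Theta : 'I_n -> list R -> Prop) (t' t : 'I_n -> profile n -> R) : Prop :=
  (forall th, inTheta Theta th -> forall i, t i th <= t' i th) /\
  (exists th i, inTheta Theta th /\ t i th < t' i th).

Definition is_max_i (n : nat) (Theta : 'I_n -> list R -> Prop) (t : 'I_n -> profile n -> R)
  (i : 'I_n) (th : profile n) (s : R) : Prop :=
  (exists x, Theta i x /\ s = Ttot t (upd th i x)) /\
  (forall x, Theta i x -> Ttot t (upd th i x) <= s).

Definition S_BCGC (n : nat) (Theta : 'I_n -> list R -> Prop) (t : 'I_n -> profile n -> R)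
  (i : 'I_n) (th : profile n) : R :=
  epsilon (inhabits 0) (is_max_i Theta t i th).

Definition t_BCGC (n : nat) (Theta : 'I_n -> list R -> Prop) (t : 'I_n -> profile n -> R)
  (i : 'I_n) (th : profile n) : R :=
  t i th - S_BCGC Theta t i th / INR n.

(* Main.v *)
Require Import Defs.
From mathcomp Require Import all_boot.
From Stdlib Require Import Reals Lra Psatz ClassicalEpsilon Classical FunctionalExtensionality.
Set Implicit Arguments. Unset Strict Implicit.
Local Open Scope R_scope.

Definition contK (K : list R -> Prop) (g : list R -> R) : Prop :=
  forall x, K x -> forall eps, 0 < eps -> exists d, 0 < d /\
    forall y, K y -> close d y x -> Rabs (g y - g x) < eps.

Lemma close_mono d d' x y : d <= d' -> close d x y -> close d' x y.
Proof. move=> h c j; move: (c j); lra. Qed.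

Lemma contK_sum K (I : Type) (r : seq I) (P : pred I) (F : I -> list R -> R) :
  (forall j, contK K (F j)) ->
  contK K (fun x => \big[Rplus/0]_(j <- r | P j) F j x).
Proof.
move=> hF; elim: r => [|a r IH].
- move=> x _ eps he; exists 1; split; first lra.
  move=> y _ _; rewrite !big_nil Rminus_diag Rabs_R0; lra.
- case Pa: (P a).
  + move=> x Kx eps he.
    have he2 : 0 < eps / 2 by lra.
    have [d1 [d1p H1]] := hF a x Kx _ he2.
    have [d2 [d2p H2]] := IH x Kx _ he2.
    exists (Rmin d1 d2); split; first by apply Rmin_pos.
    move=> y Ky cy; rewrite !big_cons Pa.
    have c1 := H1 y Ky (@close_mono _ _ y x (Rmin_l d1 d2) cy).
    have c2 := H2 y Ky (@close_mono _ _ y x (Rmin_r d1 d2) cy).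
    set A := F a y - F a x in c1.
    set B := (\big[Rplus/0]_(j <- r | P j) F j y - \big[Rplus/0]_(j <- r | P j) F j x) in c2.
    have -> : F a y + \big[Rplus/0]_(j <- r | P j) F j y -
              (F a x + \big[Rplus/0]_(j <- r | P j) F j x) = A + B by rewrite /A /B; ring.
    have := Rabs_triang A B; lra.
  + move=> x Kx eps he; have [d [dp H]] := IH x Kx _ he.
    exists d; split => // y Ky cy; rewrite !big_cons Pa; exact: H.
Qed.

Lemma list_max (K : list R -> Prop) (g : list R -> R) (l : list (list R)) :
  (exists a, List.In a l /\ K a) ->
  exists b, List.In b l /\ K b /\ forall a, List.In a l -> K a -> g a <= g b.
Proof.
elim: l => [[a [[] _]]|c l IH] h.
case: (classic (exists a, List.In a l /\ K a)) => [h'|h'].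
- have [b [bl [Kb Hb]]] := IH h'.
  case: (classic (K c /\ g b <= g c)) => [[Kc le]|nc].
  + exists c; split; [by left|split=> // a [<-|al] Ka]; first lra.
    have := Hb a al Ka; lra.
  + exists b; split; [by right|split=> // a [<-|al] Ka]; last exact: Hb.
    apply Rnot_lt_le => lt; apply nc; split => //; lra.
- have Kc : K c.
    case: h => a [[<-|al] Ka] //; exfalso; apply h'; by exists a.
  exists c; split; [by left|split=> // a [<-|al] Ka]; first lra.
  exfalso; apply h'; by exists a.
Qed.

Lemma attain k K g x0 : compact_in k K -> contK K g -> K x0 ->
  exists x, K x /\ forall y, K y -> g y <= g x.
Proof.
move=> [hsz hc] hg Kx0; apply NNPP => hno.
have hlt : forall x, K x -> exists a, K a /\ g x < g a.
  move=> x Kx; apply NNPP => hn; apply hno; exists x; split => // y Ky.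
  apply Rnot_lt_le => lt; apply hn; by exists y.
pose U := fun (a : list R) (y : list R) => K a /\ size y = k /\ exists d, 0 < d /\
   forall z, size z = k -> close d z y -> K z -> g z < g a.
have hop : forall a, open_in k (U a).
  move=> a y [Ka [sy [d [dp Hd]]]]; split => //.
  exists (d/2); split; first lra.
  move=> z sz cz; split => //; split => //; exists (d/2); split; first lra.
  move=> w sw cw Kw; apply Hd => // j.
  have := cw j; have := cz j.
  have := Rabs_triang (nth 0 w j - nth 0 z j) (nth 0 z j - nth 0 y j).
  have -> : nth 0 w j - nth 0 z j + (nth 0 z j - nth 0 y j) = nth 0 w j - nth 0 y j by ring.
  lra.
have hcov : forall x, K x -> exists a, U a x.
  move=> x Kx; have [a [Ka lt]] := hlt x Kx.
  have he : 0 < g a - g x by lra.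
  have [d [dp Hd]] := hg x Kx _ he.
  exists a; split => //; split; first exact: hsz.
  exists d; split => // z _ cz Kz; have := Hd z Kz cz.
  move/Rabs_def2 => [h1 h2]; lra.
have [l Hl] := hc _ U hop hcov.
have [a0 [al0 [Ka0 _]]] := Hl x0 Kx0.
have [b [bl [Kb Hb]]] := @list_max K g l (ex_intro _ a0 (conj al0 Ka0)).
have [a [al [Ka [_ [d [dp Hd]]]]]] := Hl b Kb.
have := Hd b (hsz b Kb) ltac:(move=> j; rewrite Rminus_diag Rabs_R0; lra) Kb.
have := Hb a al Ka; lra.
Qed.

Lemma upd_same n (th : profile n) i : upd th i (th i) = th.
Proof. apply functional_extensionality => j; rewrite /upd; by case: eqP => [->|]. Qed.

Lemma upd_in n (Theta : 'I_n -> list R -> Prop) th i x :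
  inTheta Theta th -> Theta i x -> inTheta Theta (upd th i x).
Proof. move=> h hx j; rewrite /upd; case: eqP => [->|] //. Qed.

Lemma S_spec n (k : 'I_n -> nat) (Theta : 'I_n -> list R -> Prop)
  (hcomp : forall i, compact_in (k i) (Theta i)) (t : 'I_n -> profile n -> R)
  (hcont : forall i, cont_on Theta (t i)) th i :
  inTheta Theta th -> is_max_i Theta t i th (S_BCGC Theta t i th).
Proof.
move=> hth; rewrite /S_BCGC; apply epsilon_spec.
pose g := fun x => Ttot t (upd th i x).
have hg : contK (Theta i) g.
  rewrite /g /Ttot; apply: contK_sum => j x Kx eps he.
  have [d [dp Hd]] := hcont j _ (upd_in hth Kx) eps he.
  exists d; split => // y Ky cy; apply: Hd; first exact: upd_in.
  move=> l; rewrite /upd; case: eqP => _ //.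
  move=> m; rewrite Rminus_diag Rabs_R0; lra.
have [x [Kx Hx]] := attain (hcomp i) hg (hth i).
exists (g x); split; first by exists x.
exact: Hx.
Qed.

Lemma sum_le (I : Type) (r : seq I) (P : pred I) (F G : I -> R) :
  (forall i, F i <= G i) -> \big[Rplus/0]_(i <- r | P i) F i <= \big[Rplus/0]_(i <- r | P i) G i.
Proof.
move=> h; elim: r => [|a r IH]; rewrite ?big_nil ?big_cons; first lra.
case: (P a) => //; have := h a; lra.
Qed.

Lemma sum_subc (I : Type) (r : seq I) (F : I -> R) c :
  \big[Rplus/0]_(i <- r) (F i - c) = \big[Rplus/0]_(i <- r) F i - INR (size r) * c.
Proof.
elim: r => [|a r IH]; rewrite ?big_nil ?big_cons /=; first ring.
rewrite IH; case: (size r) => [|m] /=; ring.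
Qed.

Lemma size_ie n : size (index_enum 'I_n) = n.
Proof. by rewrite /index_enum -enumT size_enum_ord. Qed.

Theorem mainTheorem1 (D : Type) (n : nat) (hn : (2 <= n)%nat)
  (k : 'I_n -> nat) (Theta : 'I_n -> list R -> Prop)
  (hcomp : forall i, compact_in (k i) (Theta i))
  (f : profile n -> D) (t : 'I_n -> profile n -> R)
  (hcont : forall i, cont_on Theta (t i)) :
  feasible Theta (t_BCGC Theta t) /\
  (feasible Theta t ->
     (forall th, inTheta Theta th -> forall i, t_BCGC Theta t i th = t i th) \/
     dominates Theta (t_BCGC Theta t) t).
Proof.
have npos : 0 < INR n.
  apply lt_0_INR; apply/ltP; by apply: leq_trans hn.
split.
- move=> th hth; rewrite /Ttot.
  have Hs : \big[Rplus/0]_(i < n) t_BCGC Theta t i th <=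
            \big[Rplus/0]_(i < n) (t i th - Ttot t th / INR n).
    apply: sum_le => i; rewrite /t_BCGC.
    have [_ hub] := S_spec hcomp hcont i hth.
    have := hub (th i) (hth i); rewrite upd_same => h.
    apply Rplus_le_compat_l, Ropp_le_contravar.
    apply Rmult_le_compat_r; [left; apply Rinv_0_lt_compat; lra | exact h].
  apply: Rle_trans Hs _.
  rewrite sum_subc size_ie -/(Ttot t th).
  right; field; lra.
- move=> hf.
  have Sle : forall th i, inTheta Theta th -> S_BCGC Theta t i th <= 0.
    move=> th i hth; have [[x [Kx ->]] _] := S_spec hcomp hcont i hth.
    apply hf; exact: upd_in.
  case: (classic (forall th, inTheta Theta th -> forall i, S_BCGC Theta t i th = 0)) => h.
  + left => th hth i; rewrite /t_BCGC h //; field; lra.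
  + right; split.
    * move=> th hth i; rewrite /t_BCGC.
      have := Sle th i hth => hs.
      have : S_BCGC Theta t i th / INR n <= 0.
        have ip : 0 < / INR n by apply Rinv_0_lt_compat; lra.
        rewrite /Rdiv; nra.
      lra.
    * apply NNPP => hne; apply h => th hth i.
      apply Rle_antisym; first exact: Sle.
      apply Rnot_lt_le => lt; apply hne; exists th, i; split => //.
      rewrite /t_BCGC.
      have : S_BCGC Theta t i th / INR n < 0.
        have ip : 0 < / INR n by apply Rinv_0_lt_compat; lra.
        rewrite /Rdiv; nra.
      lra.
Qed.
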